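(* Assume the Gaussian setting (G) described in the context. There exists a positive constant $K$ such that $$\mathbb{P}\Big(\forall\lambda,\lambda'\in[\lambda_{\min},\lambda_{\max}]:\ \mathcal{C}_{\lambda'}(\hat w_R(\lambda))\le\mathcal{C}_{\lambda'}(\hat w_R(\lambda'))+K|\lambda-\lambda'|\Big)=1-o(1).$$
   Context: Asymptotic regime: sequence indexed by $n$, $p=p(n)$, $p/n\to\delta\in(0,\infty)$. Data $y=X\beta+\sigma z$, deterministic $\beta$; $K$ depends only on $\delta,\sigma_{\max},\lambda_{\min},\lambda_{\max}$. Gaussian setting (G): $X_{ij}$ i.i.d. $\mathcal{N}(0,1)$; $z_i$ i.i.d. $\mathcal{N}(0,1)$ independent of $X$, $\sigma^2\le\sigma_{\max}^2$; $\|\beta\|_2^2\to\sigma_\beta^2\le\sigma_{\max}^2<\infty$; $0<\lambda_{\min}\le\lambda_{\max}<\infty$. $\mathcal{C}_\lambda(w)=\frac{1}{2n}\|Xw-\sigma z\|_2^2+\frac{\lambda}{2}\|w+\beta\|_2^2$, and $\hat w_R(\lambda)=\hat\beta_R(\lambda)-\beta$, where $\hat\beta_R(\lambda)=\arg\min_b\frac1{2n}\|y-Xb\|_2^2+\frac{\lambda}{2}\|b\|_2^2$ (so $\hat w_R(\lambda)$ minimizes $\mathcal{C}_\lambda$). *)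

(* Defs.v *)
From HB Require Import structures.
From mathcomp Require Import all_boot all_order all_algebra.
From mathcomp Require Import all_classical all_reals all_analysis.
Set Implicit Arguments. Unset Strict Implicit. Unset Printing Implicit Defensive.
Import Order.TTheory GRing.Theory Num.Theory.
Import numFieldNormedType.Exports.
Local Open Scope classical_set_scope.
Local Open Scope ring_scope.

(* Mutual independence of a finite family of real random variables:
   product rule for every family of measurable sets (taking B k = setT
   for unused indices covers every subfamily). *)
Definition mutually_independent {d} {T : measurableType d} {R : realType}
  (P : probability T R) (I : finType) (Y : I -> T -> R) : Prop :=
  forall B : I -> set R, (forall k, measurable (B k)) ->
    P (\bigcap_(k in [set: I]) (Y k @^-1` B k)) =
    (\prod_(k : I) P (Y k @^-1` B k))%E.

Definition std_gaussian_rv {d} {T : measurableType d} {R : realType}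
  (P : probability T R) (Y : T -> R) : Prop :=
  measurable_fun setT Y /\
  forall B : set R, measurable B -> P (Y @^-1` B) = normal_prob 0 1 B.

Definition sqnorm {R : realType} {m : nat} (v : 'cV[R]_m) : R :=
  \sum_(i < m) (v i 0) ^+ 2.

Definition ridge_obj {R : realType} {n p : nat} (X : 'M[R]_(n, p))
  (y : 'cV[R]_n) (lam : R) (b : 'cV[R]_p) : R :=
  (2 * n%:R)^-1 * sqnorm (y - X *m b) + lam / 2 * sqnorm b.

Definition is_ridge_estimate {R : realType} {n p : nat} (X : 'M[R]_(n, p))
  (y : 'cV[R]_n) (lam : R) (b : 'cV[R]_p) : Prop :=
  forall b', ridge_obj X y lam b <= ridge_obj X y lam b'.

Definition cost_C {R : realType} {n p : nat} (X : 'M[R]_(n, p))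
  (z : 'cV[R]_n) (beta : 'cV[R]_p) (sigma lam : R) (w : 'cV[R]_p) : R :=
  (2 * n%:R)^-1 * sqnorm (X *m w - sigma *: z) + lam / 2 * sqnorm (w + beta).

(* the event of the lemma at sample size n, for data (X, z):
   for all lam, lam' in [lmin, lmax], with w_R(lam) = bhat(lam) - beta
   (bhat(lam) the ridge estimate, for y = X beta + sigma z),
   C_lam'(w_R(lam)) <= C_lam'(w_R(lam')) + K |lam - lam'|. *)
Definition lemma11_event {R : realType} {n p : nat} (X : 'M[R]_(n, p))
  (z : 'cV[R]_n) (beta : 'cV[R]_p) (sigma lmin lmax K : R) : Prop :=
  let y := X *m beta + sigma *: z in
  forall lam lam' : R,
    lmin <= lam <= lmax -> lmin <= lam' <= lmax ->
    forall bh bh' : 'cV[R]_p,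
      is_ridge_estimate X y lam bh -> is_ridge_estimate X y lam' bh' ->
      cost_C X z beta sigma lam' (bh - beta)
        <= cost_C X z beta sigma lam' (bh' - beta) + K * `|lam - lam'|.

(* Main.v *)
Require Import Defs.
From HB Require Import structures.
From mathcomp Require Import all_boot all_order all_algebra.
From mathcomp Require Import all_classical all_reals all_analysis.
From mathcomp Require Import measurable_realfun ring lra.
Import Order.TTheory GRing.Theory Num.Theory.
Import numFieldNormedType.Exports.
Local Open Scope classical_set_scope.
Local Open Scope ring_scope.

Lemma meas_sq_gt (R : realType) (s : R) : measurable [set x : R | s < x ^+ 2].
Proof.
rewrite (_ : [set x | s < x ^+ 2] = (fun x : R => x ^+ 2) @^-1` `]s, +oo[%classic).
  rewrite -[X in measurable X]setTI.
  by apply: (measurable_funX 2 (@measurable_id _ _ setT)) => //.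
by apply/seteqP; split => x /=; rewrite in_itv /= andbT.
Qed.

Lemma pdf_cmp (R : realType) (x s : R) : s < x ^+ 2 ->
  normal_pdf 0 1 x <= normal_peak (1:R) / normal_peak (Num.sqrt (2:R)) * expR (- s / 4)
     * normal_pdf 0 (Num.sqrt 2) x.
Proof.
move=> sx.
set sg : R := Num.sqrt 2.
have sg2 : sg ^+ 2 = 2 by rewrite sqr_sqrtr.
have sg0 : sg != 0 by rewrite sqrtr_eq0 -ltNge.
rewrite !normal_pdfE ?oner_neq0 //= /normal_fun !subr0 expr1n sg2.
have p0 : 0 < normal_peak sg by rewrite normal_peak_gt0.
rewrite -!mulrA ler_pM2l ?normal_peak_gt0 ?oner_neq0 //.
rewrite mulrCA mulKf ?gt_eqF // -expRD ler_expR.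
rewrite (_ : (2:R) *+ 2 = 4); last by rewrite mulr2n; lra.
lra.
Qed.

Lemma gauss_tail (R : realType) : exists c0 : R, 0 < c0 /\
  forall s : R, (normal_prob 0 1 [set x : R | (s < x ^+ 2)%R] <= ((c0 * expR (- s / 4))%R)%:E)%E.
Proof.
set sg : R := Num.sqrt 2.
have sg0 : sg != 0 by rewrite sqrtr_eq0 -ltNge.
exists (normal_peak (1:R) / normal_peak sg); split.
  by rewrite divr_gt0 // normal_peak_gt0 // oner_neq0.
move=> s.
rewrite /normal_prob.
have mA := @meas_sq_gt R s.
set c : R := normal_peak (1:R) / normal_peak sg * expR (- s / 4).
have H : (\int[lebesgue_measure]_(x in [set x : R | (s < x ^+ 2)%R]) (normal_pdf 0 1 x)%:E <=
  \int[lebesgue_measure]_(x in [set x : R | (s < x ^+ 2)%R]) (c%:E * (normal_pdf 0 sg x)%:E))%E.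
  apply: ge0_le_integral => //.
  - by move=> x _; rewrite lee_fin normal_pdf_ge0.
  - apply/measurable_EFinP; apply: measurable_funS (measurable_normal_pdf _ _) => //.
  - apply: emeasurable_funM => //; apply/measurable_EFinP;
    apply: measurable_funS (measurable_normal_pdf _ _) => //.
  move=> x /= sx; rewrite -EFinM lee_fin.
  exact: pdf_cmp.
apply: (le_trans H).
rewrite ge0_integralZl //; last 3 first.
- apply/measurable_EFinP; apply: measurable_funS (measurable_normal_pdf _ _) => //.
- by move=> x _; rewrite lee_fin normal_pdf_ge0.
- by rewrite lee_fin mulr_ge0 ?expR_ge0 // divr_ge0 // normal_peak_ge0.
rewrite -[leRHS]mule1 lee_pmul2l //; last first.
  by rewrite lte_fin mulr_gt0 ?expR_gt0 // divr_gt0 // normal_peak_gt0 // oner_neq0.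
rewrite -(integral_normal_pdf 0 sg).
apply: ge0_subset_integral => //.
- by apply/measurable_EFinP; exact: measurable_normal_pdf.
- by move=> x _; rewrite lee_fin normal_pdf_ge0.
Qed.
Lemma second_moment d (T : measurableType d) (R : realType) (P : probability T R)
  (I : finType) (A : I -> set T) (w : I -> I -> R) (eps : R) :
  (forall a, measurable (A a)) -> 0 < eps ->
  (forall a b, fine (P (A a `&` A b)) <= fine (P (A a)) * fine (P (A b)) + w a b) ->
  (P [set t | (eps <= `| \sum_a (\1_(A a) t : R) - \sum_a fine (P (A a)) |)%R ]
     <= ((\sum_a \sum_b w a b) / eps ^+ 2)%:E)%E.
Proof.
move=> mA eps0 Hw.
set p := fun a => fine (P (A a)).
have pE a : P (A a) = (p a)%:E by rewrite /p fineK // fin_num_measure.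
set S := fun t => \sum_a (\1_(A a) t : R).
set m := \sum_a p a.
have mS : measurable_fun setT S.
  by apply: measurable_sum => a; apply: measurable_indic.
have S0 t : 0 <= S t by apply: sumr_ge0 => a _; by rewrite indicE ler0n.
have p0 a : 0 <= p a by rewrite /p fine_ge0.
have m0 : 0 <= m by apply: sumr_ge0.
set D := [set t | eps <= `| S t - m |].
have mD : measurable D.
  have mf : measurable_fun setT (fun t => `| S t - m |).
    apply: measurableT_comp => //; apply: measurable_funB => //.
  have -> : D = setT `&` (fun t => `| S t - m |) @^-1` `[eps, +oo[%classic.
    by apply/seteqP; split => t /=; rewrite in_itv /= andbT // => [[_]].
  exact: (mf measurableT `[eps, +oo[%classic (measurable_itv _)).
have mSm : measurable_fun setT (fun t => (S t - m) ^+ 2).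
  by apply: measurable_funX; apply: measurable_funB.
have step1 : ((eps ^+ 2)%:E * P D <= \int[P]_t ((S t - m) ^+ 2)%:E)%E.
  have iD : (\int[P]_t (\1_D t : R)%:E = P D)%E by rewrite integral_indic // setIT.
  have iD2 : (\int[P]_t ((eps ^+ 2)%:E * (\1_D t : R)%:E) = (eps ^+ 2)%:E * P D)%E.
    rewrite ge0_integralZl_EFin ?iD //.
    - by apply/measurable_EFinP; apply: measurable_indic.
    - by rewrite exprn_ge0 // ltW.
  rewrite -iD2.
  apply: ge0_le_integral => //.
  - move=> t _; rewrite lee_fin; apply: mulr_ge0; [by rewrite exprn_ge0 // ltW | by rewrite indicE ler0n].
  - apply/measurable_EFinP; apply: measurable_funM => //; apply: measurable_indic.
  - by apply/measurable_EFinP.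
  move=> t _; rewrite lee_fin indicE.
  case: (boolP (t \in D)) => tD; last by rewrite mulr0 sqr_ge0.
  rewrite mulr1 -real_normK ?num_real //.
  rewrite inE /D /= in tD.
  have e0 := ltW eps0.
  rewrite -[X in _ <= X]real_normK ?num_real // ler_sqr ?nnegrE // ger0_norm //.
have intS : (\int[P]_t (S t)%:E = m%:E)%E.
  under eq_integral do rewrite /S -sumEFin.
  rewrite ge0_integral_sum //; last first.
    by move=> a; apply/measurable_EFinP; apply: measurable_indic.
  rewrite /m -sumEFin; apply: eq_bigr => a _.
  by rewrite integral_indic // setIT /p fineK // fin_num_measure.
have S2E t : S t ^+ 2 = \sum_a \sum_b (\1_(A a `&` A b) t : R).
  rewrite expr2 /S mulr_suml; apply: eq_bigr => a _; rewrite mulr_sumr.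
  by apply: eq_bigr => b _; rewrite indicI.
have S2E' t : ((S t ^+ 2)%:E = \sum_a \sum_b (\1_(A a `&` A b) t : R)%:E)%E.
  by rewrite S2E -sumEFin; apply: eq_bigr => a _; rewrite sumEFin.
have intS2 : (\int[P]_t ((S t ^+ 2)%:E) = \sum_a \sum_b P (A a `&` A b))%E.
  under eq_integral do rewrite S2E'.
  rewrite ge0_integral_sum //; last first.
  - by move=> a t _; apply: sume_ge0 => b _; rewrite lee_fin indicE ler0n.
  - move=> a; apply: emeasurable_sum => b.
    by apply/measurable_EFinP; apply: measurable_indic; apply: measurableI.
  apply: eq_bigr => a _; rewrite ge0_integral_sum //;
    try (by move=> b t _; rewrite lee_fin indicE ler0n);
    try (by move=> b; apply/measurable_EFinP; apply: measurable_indic; apply: measurableI).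
  by apply: eq_bigr => b _; rewrite integral_indic ?setIT //; apply: measurableI.
have boundS2 : (\sum_a \sum_b P (A a `&` A b) <= (m ^+ 2 + \sum_a \sum_b w a b)%:E)%E.
  have -> : m ^+ 2 + \sum_a \sum_b w a b = \sum_a \sum_b (p a * p b + w a b).
    rewrite expr2 /m mulr_suml -big_split; apply: eq_bigr => a _.
    by rewrite mulr_sumr -big_split.
  rewrite -sumEFin; apply: lee_sum => a _; rewrite -sumEFin; apply: lee_sum => b _.
  rewrite -(@fineK _ (P (A a `&` A b))) ?fin_num_measure //; last exact: measurableI.
  by rewrite lee_fin; apply: Hw.
have pt t : (((S t - m) ^+ 2)%:E + ((2 * m) * S t)%:E = ((S t) ^+ 2)%:E + (m ^+ 2)%:E)%E.
  by rewrite -!EFinD; congr EFin; ring.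
have H1 : (\int[P]_t (((S t - m) ^+ 2)%:E + ((2 * m) * S t)%:E)
    = \int[P]_t (((S t) ^+ 2)%:E + (m ^+ 2)%:E))%E.
  by apply: eq_integral => t _; exact: pt.
have I1 : (\int[P]_t (((S t - m) ^+ 2)%:E + ((2 * m) * S t)%:E)
    = \int[P]_t ((S t - m) ^+ 2)%:E + ((2 * m) * m)%:E)%E.
  rewrite ge0_integralD //;
    try (by move=> t _; rewrite lee_fin sqr_ge0);
    try (by apply/measurable_EFinP);
    try (by move=> t _; rewrite lee_fin !mulr_ge0);
    try (by apply/measurable_EFinP; apply: measurable_funM).
  congr (_ + _)%E.
  under eq_integral do rewrite EFinM.
  rewrite ge0_integralZl_EFin //;
    try (by move=> t _; rewrite lee_fin);
    try (by apply/measurable_EFinP);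
    try (by rewrite mulr_ge0).
  by rewrite intS -EFinM.
have I2 : (\int[P]_t (((S t) ^+ 2)%:E + (m ^+ 2)%:E)
    = \int[P]_t ((S t) ^+ 2)%:E + (m ^+ 2)%:E)%E.
  rewrite ge0_integralD //;
    try (by move=> t _; rewrite lee_fin sqr_ge0);
    try (by apply/measurable_EFinP; apply: measurable_funX);
    try (by move=> t _; rewrite lee_fin sqr_ge0).
  congr (_ + _)%E.
  rewrite integral_cst //; set X := (X in (_ * X)%E); have -> : X = 1%E by rewrite /X; exact: probability_setT.
  by rewrite mule1.
have key : (\int[P]_t ((S t - m) ^+ 2)%:E <= (\sum_a \sum_b w a b)%:E)%E.
  have I0 : (0 <= \int[P]_t ((S t - m) ^+ 2)%:E)%E.
    by apply: integral_ge0 => t _; rewrite lee_fin sqr_ge0.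
  move: I0 boundS2 H1; rewrite I1 I2 intS2.
  case: (\int[P]_t _)%E => [r| |] //; case: (\sum_a \sum_b P _)%E => [j| |] //.
  rewrite !lee_fin -!EFinD => r0 jb [] eq.
  lra.
have := le_trans step1 key.
rewrite -(@fineK _ (P D)) ?fin_num_measure // -EFinM lee_fin => h.
by rewrite lee_fin ler_pdivlMr ?exprn_gt0 // mulrC.
Qed.
Lemma union_bound d (T : measurableType d) (R : realType) (P : probability T R)
  (I : finType) (B : I -> set T) : (forall i, measurable (B i)) ->
  (P [set t | exists i, B i t] <= \sum_i P (B i))%E.
Proof.
move=> mB.
have gen (s : seq I) : measurable [set t | exists2 i, i \in s & B i t] /\
    (P [set t | exists2 i, i \in s & B i t] <= \sum_(i <- s) P (B i))%E.
  elim: s => [|h s [ms IH]].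
    have -> : [set t | exists2 i, i \in [::] & B i t] = set0.
      by apply/seteqP; split => t // [].
    by rewrite measure0 big_nil.
  have -> : [set t | exists2 i, i \in h :: s & B i t] =
      B h `|` [set t | exists2 i, i \in s & B i t].
    apply/seteqP; split => t /=.
      by move=> [i]; rewrite inE => /orP [/eqP -> | iS Bi]; [left | right; exists i].
    move=> [Bh | [i iS Bi]]; first by exists h => //; rewrite mem_head.
    by exists i => //; rewrite inE iS orbT.
  split; first exact: measurableU.
  rewrite big_cons; apply: le_trans (measureU2 _ _ _) _ => //.
  exact: leeD.
have -> : [set t | exists i, B i t] = [set t | exists2 i, i \in index_enum I & B i t].
  by apply/seteqP; split => t /= [i]; exists i => //; rewrite mem_index_enum.
exact: (gen _).2.
Qed.
Lemma sqnormN (R : realType) (m : nat) (v : 'cV[R]_m) : sqnorm (- v) = sqnorm v.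
Proof. by apply: eq_bigr => i _; rewrite mxE sqrrN. Qed.

Lemma sqnormZ (R : realType) (m : nat) (a : R) (v : 'cV[R]_m) :
  sqnorm (a *: v) = a ^+ 2 * sqnorm v.
Proof. by rewrite /sqnorm mulr_sumr; apply: eq_bigr => i _; rewrite mxE exprMn. Qed.

Lemma sqnorm_ge0 (R : realType) (m : nat) (v : 'cV[R]_m) : 0 <= sqnorm v.
Proof. by apply: sumr_ge0 => i _; exact: sqr_ge0. Qed.
Arguments sqnorm_ge0 {R m}.

Lemma ridge_gap (R : realType) (n p : nat) (X : 'M[R]_(n, p)) (z : 'cV[R]_n)
  (beta : 'cV[R]_p) (sigma lmin lmax K : R) :
  0 < lmin -> sqnorm beta + sigma ^+ 2 * (sqnorm z * n%:R^-1) / lmin <= K ->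
  lemma11_event X z beta sigma lmin lmax K.
Proof.
move=> lmin0 HK; rewrite /lemma11_event => lam lam' /andP[l1 l2] /andP[l1' l2'] bh bh' Hbh Hbh'.
set y := X *m beta + sigma *: z.
have cE lm b : cost_C X z beta sigma lm (b - beta) = ridge_obj X y lm b.
  rewrite /cost_C /ridge_obj subrK -sqnormN; congr (_ * sqnorm _ + _).
  by rewrite /y mulmxBr opprB opprB addrA [_ *: z + _]addrC.
rewrite !cE.
set Q := fun b => (2 * n%:R)^-1 * sqnorm (y - X *m b).
have Q0 b : 0 <= Q b by rewrite /Q mulr_ge0 ?sqnorm_ge0 // invr_ge0 mulr_ge0 // ler0n.
have objE lm b : ridge_obj X y lm b = Q b + lm / 2 * sqnorm b by [].
have bnd lm b : lmin <= lm -> is_ridge_estimate X y lm b -> sqnorm b <= K.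
  move=> hl Hb; have := Hb beta; rewrite !objE /Q.
  have -> : y - X *m beta = sigma *: z by rewrite /y addrAC subrr add0r.
  rewrite sqnormZ => h.
  have lm0 : 0 < lm by apply: lt_le_trans hl.
  apply: le_trans HK.
  have Qb := Q0 b; rewrite /Q in Qb.
  set Nb := sqnorm b in h Qb *; set Nz := sqnorm z in h *; set Nbeta := sqnorm beta in h *.
  have Nz0 : 0 <= sigma ^+ 2 * (Nz * n%:R^-1) by rewrite mulr_ge0 ?sqr_ge0 // mulr_ge0 ?sqnorm_ge0 // invr_ge0 ler0n.
  have h2 : lm / 2 * Nb <= sigma ^+ 2 * (Nz * n%:R^-1) / 2 + lm / 2 * Nbeta.
    have -> : sigma ^+ 2 * (Nz * n%:R^-1) / 2 = (2 * n%:R)^-1 * (sigma ^+ 2 * Nz).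
      by rewrite invfM; ring.
    lra.
  have h3 : Nb <= Nbeta + sigma ^+ 2 * (Nz * n%:R^-1) / lm.
    rewrite -(ler_pM2l lm0) mulrDr mulrCA divff ?gt_eqF // mulr1.
    nra.
  apply: (le_trans h3); rewrite lerD2l.
  apply: ler_wpM2l => //; rewrite lef_pV2 ?posrE //.
have N1 := bnd lam bh l1 Hbh.
have N2 := bnd lam' bh' l1' Hbh'.
have := Hbh bh'; rewrite !objE => H.
have n1 := sqnorm_ge0 bh; have n2 := sqnorm_ge0 bh'.
have K0 : 0 <= K by apply: le_trans n1 N1.
move: H N1 N2 n1 n2; set N1 := sqnorm bh; set N2 := sqnorm bh'.
set Q1 := Q bh; set Q2 := Q bh' => H N1K N2K n1 n2.
have [hl|hl] := lerP lam lam'.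
  have : (lam' - lam) * N1 <= (lam' - lam) * K by apply: ler_wpM2l; rewrite ?subr_ge0.
  nra.
have : (lam - lam') * N2 <= (lam - lam') * K by apply: ler_wpM2l => //; rewrite subr_ge0 ltW.
nra.
Qed.
Lemma indic_lt (R : realType) (T : Type) (f : T -> R) (c : R) (t : T) :
  \1_(f @^-1` [set x : R | (c < x ^+ 2)%R]) t = ((c < f t ^+ 2)%R : bool)%:R :> R.
Proof.
rewrite indicE; case: (boolP (c < f t ^+ 2)) => h.
  by rewrite mem_set.
by rewrite memNset //=; apply/negP.
Qed.

Lemma count_lemma (R : realType) (x : R) (L : nat) : 0 <= x -> x <= L%:R ->
  x <= \sum_(k < L) ((k%:R < x)%R : bool)%:R.
Proof.
move=> x0.
suff : (x <= L%:R -> x <= \sum_(k < L) ((k%:R < x)%R : bool)%:R) /\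
       (L%:R <= x -> L%:R <= \sum_(k < L) ((k%:R < x)%R : bool)%:R :> R).
  by case.
elim: L => [|L [IH1 IH2]]; first by rewrite big_ord0.
rewrite big_ord_recr /= -natr1.
have s0 : 0 <= \sum_(k < L) ((k%:R < x)%R : bool)%:R :> R by apply: sumr_ge0 => k _; exact: ler0n.
split.
  move=> xL; have [xl|lx] := lerP x L%:R.
    by apply: le_trans (IH1 xl) _; rewrite lerDl ler0n.
  by apply: le_trans xL _; rewrite /= lerD2r; exact: IH2 (ltW lx).

move=> Lx; have lx : L%:R < x by apply: lt_le_trans Lx; rewrite ltrDl.
by rewrite lx /= lerD2r; apply: IH2; apply: ltW.
Qed.

Lemma geom_bound (R : realType) (r : R) (L : nat) : 0 <= r < 1 ->
  \sum_(k < L) r ^+ k <= (1 - r)^-1.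
Proof.
case/andP => r0 r1.
have id : (1 - r) * \sum_(k < L) r ^+ k = 1 - r ^+ L.
  elim: L => [|L IH]; first by rewrite big_ord0 mulr0 expr0 subrr.
  by rewrite big_ord_recr /= mulrDr IH exprS; ring.
rewrite -(ler_pM2l (_ : 0 < 1 - r)) ?subr_gt0 // id divff ?gt_eqF ?subr_gt0 //.
by rewrite lerBlDr lerDl exprn_ge0.
Qed.

Lemma union_meas d (T : measurableType d) (I : finType) (B : I -> set T) :
  (forall i, measurable (B i)) -> measurable [set t | exists i, B i t].
Proof.
move=> mB.
have gen (s : seq I) : measurable [set t | exists2 i, i \in s & B i t].
  elim: s => [|h s ms].
    have -> : [set t | exists2 i, i \in [::] & B i t] = set0.
      by apply/seteqP; split => t // [].
    exact: measurable0.
  have -> : [set t | exists2 i, i \in h :: s & B i t] =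
      B h `|` [set t | exists2 i, i \in s & B i t].
    apply/seteqP; split => t /=.
      by move=> [i]; rewrite inE => /orP [/eqP -> | iS Bi]; [left | right; exists i].
    move=> [Bh | [i iS Bi]]; first by exists h => //; rewrite mem_head.
    by exists i => //; rewrite inE iS orbT.
  exact: measurableU.
have -> : [set t | exists i, B i t] = [set t | exists2 i, i \in index_enum I & B i t].
  by apply/seteqP; split => t /= [i]; exists i => //; rewrite mem_index_enum.
exact: gen.
Qed.

Lemma meas_absdev d (T : measurableType d) (R : realType) (f : T -> R) (c e : R) :
  measurable_fun setT f -> measurable [set t | e <= `| f t - c |].
Proof.
move=> mf.
have mg : measurable_fun setT (fun t => `| f t - c |).
  by apply: measurableT_comp => //; apply: measurable_funB.
have -> : [set t | e <= `| f t - c |] = setT `&` (fun t => `| f t - c |) @^-1` `[e, +oo[%classic.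
  by apply/seteqP; split => t /=; rewrite in_itv /= andbT // => [[_]].
exact: (mg measurableT `[e, +oo[%classic (measurable_itv _)).
Qed.
Arguments meas_sq_gt {R}.

Lemma chi_bound d (T : measurableType d) (R : realType) (P : probability T R) (n : nat)
  (z : 'I_n -> T -> R) (c0 : R) :
  0 < c0 ->
  (forall s : R, (normal_prob 0 1 [set x : R | (s < x ^+ 2)%R] <= ((c0 * expR (- s / 4))%R)%:E)%E) ->
  (forall i, std_gaussian_rv P (z i)) ->
  (forall i j, i != j -> forall B C : set R, measurable B -> measurable C ->
      P (z i @^-1` B `&` z j @^-1` C) = (P (z i @^-1` B) * P (z j @^-1` C))%E) ->
  (0 < n)%N ->
  1 - (64 * c0 + c0 * ((1 - expR (-1/8 : R))^-1) ^+ 2) / n%:R <=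
    fine (P [set t | \sum_i z i t ^+ 2 <= (c0 * (1 - expR (-1/8 : R))^-1 + 1) * n%:R]).
Proof.
move=> c00 tail hz indep n0.
set rho := expR (-1/8 : R).
have rho0 : 0 < rho := expR_gt0 _.
have rho1 : rho < 1 by rewrite /rho expR_lt1; lra.
set g := (1 - rho)^-1.
have g0 : 0 < g by rewrite invr_gt0 subr_gt0.
have geo L : \sum_(k < L) rho ^+ k <= g by apply: geom_bound; rewrite ltW.
have mz i B : measurable B -> measurable (z i @^-1` B).
  by move=> mB; rewrite -[_ @^-1` _]setTI; exact: (hz i).1 measurableT B mB.
have fP A : measurable A -> P A = (fine (P A))%:E.
  by move=> mA; rewrite fineK // fin_num_measure.
have hq i (s : R) : fine (P (z i @^-1` [set x : R | (s < x ^+ 2)%R])) <= c0 * expR (- s / 4).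
  have := tail s; rewrite -(hz i).2; last exact: meas_sq_gt.
  by rewrite (fP _ (mz _ _ (meas_sq_gt _))) lee_fin.
have erho (k : nat) : expR (- k%:R / 8) = rho ^+ k.
  by rewrite /rho -expRM_natl; congr expR; lra.
set N : R := n%:R.
have N0 : 0 < N by rewrite ltr0n.
pose A (a : 'I_n * 'I_n) := z a.1 @^-1` [set x : R | ((a.2)%:R < x ^+ 2)%R].
have mA a : measurable (A a) := mz _ _ (meas_sq_gt _).
pose w (a b : 'I_n * 'I_n) := if a.1 == b.1 then c0 * rho ^+ a.2 * rho ^+ b.2 else 0.
have pa0 a : 0 <= fine (P (A a)) by rewrite fine_ge0 // measure_ge0.
have pa a : fine (P (A a)) <= c0 * rho ^+ a.2.
  apply: le_trans (hq _ _) _; rewrite -erho ler_pM2l // ler_expR.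
  by have := ler0n R a.2; lra.
have Pfin B : measurable B -> P B \is a fin_num by move=> mB; rewrite fin_num_measure.
have fmono B C : measurable B -> measurable C -> B `<=` C -> fine (P B) <= fine (P C).
  move=> mB mC BC; apply: fine_le; rewrite ?Pfin //.
  by apply: le_measure => //; rewrite inE.
have Hw a b : fine (P (A a `&` A b)) <= fine (P (A a)) * fine (P (A b)) + w a b.
  rewrite /w; case: eqP => [e|/eqP ne].
    apply: le_trans (_ : _ <= c0 * rho ^+ a.2 * rho ^+ b.2) _; last first.
      by rewrite lerDr mulr_ge0.
    have [kl|lk] := leqP a.2 b.2.
      apply: le_trans (fmono _ (A b) (measurableI _ _ (mA a) (mA b)) (mA b) (@subIsetr _ _ _)) _.
      apply: le_trans (hq _ _) _.
      rewrite -mulrA -!erho -expRD ler_pM2l // ler_expR.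
      have : (a.2)%:R <= (b.2)%:R :> R by rewrite ler_nat.
      lra.
    apply: le_trans (fmono _ (A a) (measurableI _ _ (mA a) (mA b)) (mA a) (@subIsetl _ _ _)) _.
    apply: le_trans (hq _ _) _.
    rewrite -mulrA -!erho -expRD ler_pM2l // ler_expR.
    have : (b.2)%:R <= (a.2)%:R :> R by rewrite ler_nat ltnW.
    lra.
  rewrite addr0 /A indep //; last 2 first.
    exact: meas_sq_gt.
    exact: meas_sq_gt.
  by rewrite fineM //; apply: Pfin; apply: mz; exact: meas_sq_gt.
set G := \sum_(k < n) rho ^+ k.
have G0 : 0 <= G by apply: sumr_ge0 => k _; rewrite exprn_ge0 // ltW.
have Gg : G <= g := geo n.
have inner a : \sum_b w a b = c0 * rho ^+ a.2 * G.
  have -> : \sum_b w a b = \sum_j \sum_l w a (j, l).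
    by rewrite pair_big; apply: eq_bigr => -[j l] _.
  rewrite (bigD1 a.1) //= [X in _ + X]big1 ?addr0; last first.
    move=> j ja; apply: big1 => l _; rewrite /w /= eq_sym.
    by rewrite (negbTE ja).
  by rewrite /w /= eqxx mulr_sumr.
have sumw : \sum_a \sum_b w a b = N * (c0 * G ^+ 2).
  under eq_bigr do rewrite inner.
  have -> : \sum_(a : 'I_n * 'I_n) (c0 * rho ^+ a.2 * G) = \sum_(i < n) \sum_(k < n) (c0 * rho ^+ k * G).
    by rewrite pair_big; apply: eq_bigr => -[j l] _.
  under eq_bigr do rewrite -mulr_suml -mulr_sumr.
  by rewrite sumr_const card_ord -mulr_natl -/G; rewrite /N; ring.
have summ : \sum_a fine (P (A a)) <= N * (c0 * G).
  apply: le_trans (_ : _ <= \sum_(a : 'I_n * 'I_n) c0 * rho ^+ a.2) _.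
    by apply: ler_sum => a _; exact: pa.
  have -> : \sum_(a : 'I_n * 'I_n) (c0 * rho ^+ a.2) = \sum_(i < n) \sum_(k < n) (c0 * rho ^+ k).
    by rewrite pair_big; apply: eq_bigr => -[j l] _.
  under eq_bigr do rewrite -mulr_sumr.
  by rewrite sumr_const card_ord -mulr_natl.
have SM := @second_moment _ _ _ P _ A w N mA N0 Hw.
set D := [set t | (N <= `| \sum_a (\1_(A a) t : R) - \sum_a fine (P (A a)) |)%R] in SM.
have mS : measurable_fun setT (fun t => \sum_a (\1_(A a) t : R)).
  by apply: measurable_sum => a; apply: measurable_indic.
have mD : measurable D by apply: meas_absdev.
have PD : fine (P D) <= c0 * g ^+ 2 / N.
  rewrite -lee_fin -fP // (le_trans SM) // lee_fin sumw.
  have -> : N * (c0 * G ^+ 2) / N ^+ 2 = c0 * G ^+ 2 / N.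
    by field; rewrite gt_eqF.
  rewrite ler_pM2r ?invr_gt0 // ler_pM2l //.
  by rewrite ler_sqr ?nnegrE // ltW.
set Mi := fun i => z i @^-1` [set x : R | (N < x ^+ 2)%R].
have mMi i : measurable (Mi i) by apply: mz; exact: meas_sq_gt.
set M := [set t | exists i, Mi i t].
have mM : measurable M by apply: union_meas.
have PM : fine (P M) <= 64 * c0 / N.
  have UB := @union_bound _ _ _ P _ _ mMi.
  have : fine (P M) <= \sum_i fine (P (Mi i)).
    rewrite -lee_fin -fP // (le_trans UB) // -sumEFin.
    by apply: lee_sum => i _; rewrite -fP.
  move/le_trans; apply.
  apply: le_trans (_ : _ <= \sum_(i < n) c0 * expR (- N / 4)) _.
    by apply: ler_sum => i _; exact: hq.
  rewrite sumr_const card_ord -[_ *+ n]mulr_natl -/N.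
  have E1 := expR_ge1Dx (N / 8).
  have E2 : expR (- N / 4) * (expR (N / 8) * expR (N / 8)) = 1.
    by rewrite -!expRD (_ : - N / 4 + (N / 8 + N / 8) = 0) ?expR0 //; lra.
  have E3 := expR_gt0 (- N / 4).
  rewrite ler_pdivlMr // .
  set F := expR (- N / 4) in E2 E3 *; set Ex := expR (N / 8) in E1 E2 *.
  have h1 : N * N <= 64 * (Ex * Ex) by nra.
  have h2 : N * N * F <= 64 by nra.
  nra.
have mZ : measurable_fun setT (fun t => \sum_i z i t ^+ 2).
  by apply: measurable_sum => i; apply: measurable_funX; exact: (hz i).1.
set Gs := [set t | \sum_i z i t ^+ 2 <= (c0 * g + 1) * N].
have mGs : measurable Gs.
  have -> : Gs = setT `&` (fun t => \sum_i z i t ^+ 2) @^-1` `]-oo, (c0 * g + 1) * N]%classic.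
    by apply/seteqP; split => t /=; rewrite in_itv /= // => [[_]].
  exact: (mZ measurableT _ (measurable_itv _)).
have sub : ~` (M `|` D) `<=` Gs.
  move=> t /= H.
  have nM : ~ M t by move=> h; apply: H; left.
  have nD : ~ D t by move=> h; apply: H; right.
  have zi i : z i t ^+ 2 <= N.
    by rewrite leNgt; apply/negP => h; apply: nM; exists i.
  have Dlt : `| \sum_a (\1_(A a) t : R) - \sum_a fine (P (A a)) | < N.
    by rewrite ltNge; apply/negP => h; apply: nD.
  have h1 : \sum_i z i t ^+ 2 <= \sum_a (\1_(A a) t : R).
    have -> : \sum_a (\1_(A a) t : R) = \sum_i \sum_(k < n) ((k%:R < z i t ^+ 2)%R : bool)%:R.
      by rewrite pair_big; apply: eq_bigr => -[i k] _; rewrite /A indic_lt.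
    apply: ler_sum => i _; apply: count_lemma; [exact: sqr_ge0 | exact: zi].
  have h2 := ler_norm (\sum_a (\1_(A a) t : R) - \sum_a fine (P (A a))).
  have h3 : N * (c0 * G) <= N * (c0 * g) by rewrite ler_pM2l // ler_pM2l.
  rewrite /Gs /=; lra.
have mMD : measurable (M `|` D) by apply: measurableU.
have h1 : fine (P (~` (M `|` D))) <= fine (P Gs).
  by apply: fmono => //; apply: measurableC.
have h2 : fine (P (~` (M `|` D))) = 1 - fine (P (M `|` D)).
  by rewrite probability_setC // fP // -EFinB.
have h3 : fine (P (M `|` D)) <= fine (P M) + fine (P D).
  rewrite -lee_fin EFinD -!fP //; exact: measureU2.
have e1 : (64 * c0 + c0 * g ^+ 2) / N = 64 * c0 / N + c0 * g ^+ 2 / N by rewrite mulrDl.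
rewrite e1; lra.
Qed.

Lemma pair_indep d (T : measurableType d) (R : realType) (P : probability T R)
  (I : finType) (Y : I -> T -> R) (i j : I) (B C : set R) :
  mutually_independent P Y -> i != j -> measurable B -> measurable C ->
  P (Y i @^-1` B `&` Y j @^-1` C) = (P (Y i @^-1` B) * P (Y j @^-1` C))%E.
Proof.
move=> hind ij mB mC.
have ji : j != i by rewrite eq_sym.
pose Bf k := if k == i then B else if k == j then C else setT.
have mBf k : measurable (Bf k).
  by rewrite /Bf; case: ifP => _ //; case: ifP.
have := hind Bf mBf.
have -> : \bigcap_(k in [set: I]) (Y k @^-1` Bf k) = Y i @^-1` B `&` Y j @^-1` C.
  apply/seteqP; split => t /=.
    move=> H; split.
      by have := H i Logic.I; rewrite /Bf eqxx.
    by have := H j Logic.I; rewrite /Bf (negbTE ji) eqxx.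
  move=> [Hi Hj] k _; rewrite /Bf; case: ifP => [/eqP -> //|_].
  by case: ifP => [/eqP -> //|_].
move=> ->.
rewrite (bigD1 i) //= (bigD1 j) //= big1 ?mule1; last first.
  move=> k /andP [ki kj]; rewrite /Bf (negbTE ki) (negbTE kj) preimage_setT.
  exact: probability_setT.
by rewrite /Bf eqxx (negbTE ji) eqxx.
Qed.

Lemma meas_le d (T : measurableType d) (R : realType) (f : T -> R) (c : R) :
  measurable_fun setT f -> measurable [set t | f t <= c].
Proof.
move=> mf.
have -> : [set t | f t <= c] = setT `&` f @^-1` `]-oo, c]%classic.
  by apply/seteqP; split => t /=; rewrite in_itv /= // => [[_]].
exact: (mf measurableT _ (measurable_itv _)).
Qed.

Theorem lemma11 (R : realType) (delta sigma_max lam_min lam_max : R) :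
  0 < delta -> 0 < lam_min -> lam_min <= lam_max ->
  exists K : R, 0 < K /\
  forall (d : measure_display) (T : nat -> measurableType d)
    (P : forall n, probability (T n) R)
    (p : nat -> nat) (beta : forall n, 'cV[R]_(p n))
    (sigma sigma_beta2 : R)
    (X : forall n, 'I_n -> 'I_(p n) -> T n -> R)
    (z : forall n, 'I_n -> T n -> R),
    (fun n => (p n)%:R / n%:R) @ \oo --> delta ->
    (fun n => sqnorm (beta n)) @ \oo --> sigma_beta2 ->
    sigma_beta2 <= sigma_max ^+ 2 ->
    sigma ^+ 2 <= sigma_max ^+ 2 ->
    (forall n, mutually_independent (P n)
       (fun k : ('I_n * 'I_(p n)) + 'I_n =>
          match k with inl ij => X n ij.1 ij.2 | inr i => z n i end)) ->
    (forall n i j, std_gaussian_rv (P n) (X n i j)) ->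
    (forall n i, std_gaussian_rv (P n) (z n i)) ->
    exists A : forall n, set (T n),
      (forall n, measurable (A n)) /\
      (forall n, A n `<=` [set w | lemma11_event
          (\matrix_(i, j) X n i j w) (\col_i z n i w) (beta n)
          sigma lam_min lam_max K]) /\
      (fun n => P n (A n)) @ \oo --> 1%E.
Proof.
move=> _ lmin0 _.
have [c0 [c00 tail]] := gauss_tail R.
set g := (1 - expR (-1/8 : R))^-1.
have g0 : 0 < g.
  by rewrite invr_gt0 subr_gt0 expR_lt1; lra.
set B2 := c0 * g + 1.
have B20 : 0 < B2 by rewrite /B2; have := mulr_gt0 c00 g0; lra.
set sm2 := sigma_max ^+ 2.
have sm20 : 0 <= sm2 by exact: sqr_ge0.
exists ((sm2 + 1) + sm2 * B2 / lam_min); split.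
  have : 0 <= sm2 * B2 / lam_min by apply: divr_ge0; [apply: mulr_ge0 => //; exact: ltW | exact: ltW].
  lra.
move=> d T P p beta sigma sb2 X z _ hbeta hsb hs hind hX hz.
have indep n (i j : 'I_n) : i != j -> forall B C : set R, measurable B -> measurable C ->
    P n (z n i @^-1` B `&` z n j @^-1` C) = (P n (z n i @^-1` B) * P n (z n j @^-1` C))%E.
  move=> ij B C mB mC.
  have := @pair_indep _ _ _ (P n) _ _ (inr i) (inr j) B C (hind n).
  by apply => //; apply/eqP => -[] /eqP; rewrite (negbTE ij).
pose Gs n := [set t | \sum_i z n i t ^+ 2 <= B2 * n%:R].
have mGs n : measurable (Gs n).
  apply: meas_le; apply: measurable_sum => i; apply: measurable_funX.
  exact: (hz n i).1.
pose A n := if sqnorm (beta n) <= sm2 + 1 then Gs n else set0.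
exists A; split.
  by move=> n; rewrite /A; case: ifP.
split.
  move=> n t; rewrite /A; case: ifP => hb //= Gt.
  apply: ridge_gap => //.
  have -> : sqnorm (\col_i z n i t) = \sum_i z n i t ^+ 2.
    by apply: eq_bigr => i _; rewrite mxE.
  have Zn : (\sum_i z n i t ^+ 2) * n%:R^-1 <= B2.
    have key (Z : R) (m : nat) : Z <= B2 * m%:R -> Z * m%:R^-1 <= B2.
      case: m => [|m] h; first by rewrite invr0 mulr0 ltW.
      by rewrite ler_pdivrMr ?ltr0n.
    exact: key.
  have Z0 : 0 <= (\sum_i z n i t ^+ 2) * n%:R^-1.
    by rewrite mulr_ge0 ?invr_ge0 ?ler0n // sumr_ge0 // => i _; exact: sqr_ge0.
  have : sigma ^+ 2 * ((\sum_i z n i t ^+ 2) * n%:R^-1) / lam_min <= sm2 * B2 / lam_min.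
    rewrite ler_pM2r ?invr_gt0 //; apply: ler_pM => //; exact: sqr_ge0.
  move: hb; rewrite -/sm2; lra.
set c7 := 64 * c0 + c0 * g ^+ 2.
have c70 : 0 <= c7 by rewrite /c7 addr_ge0 ?mulr_ge0 ?sqr_ge0 // ltW.
have chi n : (0 < n)%N -> 1 - c7 / n%:R <= fine (P n (Gs n)).
  move=> n0; exact: (@chi_bound _ _ _ (P n) n (z n) c0 c00 tail (hz n) (indep n) n0).
have h1 : sb2 < sm2 + 1 by apply: (le_lt_trans hsb); rewrite ltrDl.
have hb := cvgr_le _ hbeta (sm2 + 1) h1.
apply: cvg_EFin.
  near=> n; have mAn : measurable (A n) by rewrite /A; case: ifP.
  by rewrite fin_num_measure.
apply: (@squeeze_cvgr _ _ _ _ (fun n => 1 - 2 * c7 * n.+1%:R^-1) (fun => 1)).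
- near=> n.
  have hbn : sqnorm (beta n) <= sm2 + 1 by near: n; exact: hb.
  have n0 : (0 < n)%N by near: n; exact: nbhs_infty_gt.
  rewrite /= /A hbn; apply/andP; split.
    apply: le_trans (chi n n0).
    have : c7 / n%:R <= 2 * c7 * n.+1%:R^-1.
      rewrite -natr1; set a : R := n%:R.
      have a1 : 1 <= a by rewrite /a ler1n.
      rewrite ler_pdivrMr; last lra.
      rewrite mulrAC ler_pdivlMr; last lra.
      nra.
    by move=> h; rewrite lerD2l lerN2.
  have h : (P n (Gs n) <= 1)%E by apply: probability_le1.
  have mGn := mGs n; have f1 : P n (Gs n) \is a fin_num by rewrite fin_num_measure.
  by move: h; rewrite -(fineK f1) lee_fin.
- have H : (fun n => 2 * c7 * harmonic n) @ \oo --> (2 * c7) * 0.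
    by apply: cvgM; [exact: cvg_cst | exact: cvg_harmonic].
  have H2 : (fun n => 1 - 2 * c7 * harmonic n) @ \oo --> 1 - (2 * c7) * 0.
    by apply: cvgB; [exact: cvg_cst | exact: H].
  by rewrite mulr0 subr0 in H2.
- exact: cvg_cst.
Unshelve. all: by end_near.
Qed.
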